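(* Let $X$ be a Hausdorff space and $A\in\mathcal{F}(X)$. The following are equivalent: (a) $A$ is a weak $P$-point in $\mathcal{F}(X)$; (b) $A$ is a weak $P$-point in $\mathcal{F}_n(X)$ for each positive integer $n\geq|A|$; (c) every $x\in A$ is a weak $P$-point of $X$.
   Context: $\mathcal{F}(X)$ is the set of nonempty finite subsets of $X$ and $\mathcal{F}_n(X)$ the set of nonempty subsets with at most $n$ points, with the Vietoris topology (generated by $U^+=\{A: A\subset U\}$ and $U^-=\{A: A\cap U\neq\emptyset\}$ for $U$ open in $X$). A point $p$ of a space $Z$ is a weak $P$-point if $p\notin\overline{N}$ for every countable $N\subset Z-\{p\}$. *)

(* Defs.v *)
From mathcomp Require Import all_boot all_order all_algebra.
From mathcomp Require Import all_classical all_reals all_analysis.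
Set Implicit Arguments. Unset Strict Implicit. Unset Printing Implicit Defensive.
Local Open Scope classical_set_scope.
Local Open Scope card_scope.

Section Hyperspace.
Variable X : topologicalType.

Definition hypF : set (set X) := [set A | finite_set A /\ A !=set0].
Definition hypFn (n : nat) : set (set X) := [set A | hypF A /\ A #<= `I_n].

(* basic Vietoris sets: finite intersections of U^+ and V^- with U, V open *)
Definition vietoris_basic (B : set (set X)) : Prop :=
  exists (k m : nat) (U : 'I_k -> set X) (V : 'I_m -> set X),
    (forall i, open (U i)) /\ (forall j, open (V j)) /\
    B = [set A | (forall i, A `<=` U i) /\ (forall j, A `&` V j !=set0)].

Definition vietoris_open (S W : set (set X)) : Prop :=
  W `<=` S /\ forall A, W A ->
    exists B, vietoris_basic B /\ B A /\ B `&` S `<=` W.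

Definition vietoris_closure (S N : set (set X)) : set (set X) :=
  [set A | S A /\ forall W, vietoris_open S W -> W A -> W `&` N !=set0].

Definition weakP_hyp (S : set (set X)) (p : set X) : Prop :=
  S p /\ forall N, N `<=` S -> countable N -> N `<=` ~` [set p] ->
    ~ vietoris_closure S N p.

Definition weakP_point (x : X) : Prop :=
  forall N : set X, countable N -> N `<=` ~` [set x] -> ~ closure N x.

End Hyperspace.

(* Main.v *)
Require Import Defs.
From mathcomp Require Import all_boot all_order all_algebra.
From mathcomp Require Import all_classical all_reals all_analysis.
Local Open Scope classical_set_scope.
Local Open Scope card_scope.

Lemma L1 (X : topologicalType) (A : set X) (S : set (set X)) (x : X) :
  A x -> (forall y, y != x -> S ((fun z => if z == x then y else z) @` A)) ->
  weakP_hyp S A -> weakP_point x.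
Proof.
move=> Ax HS [SA HA] N cN Nx clN.
pose g := fun y z => if z == x then y else z.
apply: (HA ((fun y => g y @` A) @` N)).
- move=> C [y Ny <-]; apply: HS; apply/eqP; exact: Nx y Ny.
- exact: (sub_countable (card_image_le _ _) cN).
- move=> C [y Ny <-] /= eqA.
  have : (g y @` A) x by rewrite eqA.
  case=> z Az; rewrite /g; case: eqP => [_ yx|zx zx'].
    by apply: (Nx y Ny).
  by apply: zx.
- split; first done.
  move=> W [WS HW] WA.
  have [B [[k [m [U [V [Uo [Vo BE]]]]]] [BA BW]]] := HW A WA.
  rewrite BE /= in BA BW.
  pose O := [set z | forall i, U i z] `&` [set z | forall j, V j x -> V j z].
  have nO : nbhs x O.
    apply: filterI.
      apply: filter_forall => i; apply: open_nbhs_nbhs; split; first exact: Uo.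
      exact: BA.1 i x Ax.
    apply: filter_forall => j; case: (pselect (V j x)) => Vx.
      apply: (filterS _ (open_nbhs_nbhs (conj (Vo j) Vx))) => z Vz _; exact: Vz.
    by apply: (filterS _ filterT) => z _ /Vx.
  have [y [Ny Oy]] := clN O nO.
  exists (g y @` A); split; last by exists y.
  apply: BW; split; [split|apply: HS; apply/eqP; exact: Nx y Ny].
  + move=> i z [w Aw <-]; rewrite /g; case: eqP => _; [exact: Oy.1 i | exact: BA.1 i w Aw].
  + move=> j; case: (pselect (V j x)) => Vx.
      exists y; split; [exists x => //; by rewrite /g eqxx | exact: Oy.2 j Vx].
    have [z [Az Vz]] := BA.2 j.
    exists z; split => //; exists z => //; rewrite /g; case: eqP => // zx.
    by subst z.
Qed.

Lemma L2 (X : topologicalType) (hX : hausdorff_space X) (A : set X) (S : set (set X)) :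
  hypF A -> S A -> S `<=` hypF (X:=X) -> (forall x, A x -> weakP_point x) ->
  weakP_hyp S A.
Proof.
move=> [fA [x0 Ax0]] SA SF HP; split=> // N NS cN NA [_ clN].
pose M := \bigcup_(C in N) (C `\` A).
have cM : countable M.
  apply: bigcup_countable => // C NC; apply: finite_set_countable.
  exact: finite_setD (SF _ (NS _ NC)).1.
have Hx : forall x, exists O : set X,
    A x -> [/\ open O, O x & forall m, M m -> ~ O m].
  move=> x; case: (pselect (A x)) => Ax; last by exists set0.
  have nclM := HP x Ax M cM.
  have MX : M `<=` [set~ x].
    by move=> m [C _ [_ nAm]] mx; apply: nAm; rewrite mx.
  case: (EM (exists2 B, nbhs x B & forall m, M m -> ~ B m)) => [[B nB MB]|H].
    move: nB; rewrite nbhsE; case=> O [Oo Ox] OB.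
    by exists O => _; split => // m Mm /OB; apply: MB.
  exfalso; apply: (nclM MX) => B nB.
  case: (EM (M `&` B !=set0)) => // h; exfalso; apply: H; exists B => // m Mm Bm.
  by apply: h; exists m.
have [Of HO] := choice Hx.
pose G := \bigcup_(x in A) Of x.
have oG : open G by apply: bigcup_open => x Ax; have [] := HO x Ax.
have [s As] := (finite_seqP A).1 fA.
pose V := fun j : 'I_(size s) => ~` (A `\ nth x0 s j).
pose Bs := [set C : set X | (forall i : 'I_1, C `<=` (fun=> G) i) /\
    (forall j, C `&` V j !=set0)].
have oV : forall j, open (V j).
  move=> j; rewrite openC; apply: ((@accessible_finite_set_closed X).1 (@hausdorff_accessible X hX)).
  exact: finite_setD.
have vo : vietoris_open S (Bs `&` S).
  split; first by move=> C [].
  move=> C [BsC SC]; exists Bs; split; last by split.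
  by exists 1%N, (size s), (fun=> G), V; split => //.
have BsA : (Bs `&` S) A.
  split; last done; split.
    by move=> i z Az; exists z => //; have [] := HO z Az.
  move=> j; exists (nth x0 s j); split.
    have : nth x0 s j \in s by apply: mem_nth.
    by rewrite As.
  by move=> [_ /(_ erefl)].
have [C [[[BC1 BC2] SC] NC]] := clN (Bs `&` S) vo BsA.
apply: (NA C NC) => /=.
have CA : C `<=` A.
  move=> z Cz; case: (pselect (A z)) => // nAz.
  have [x Ax Oxz] := BC1 ord0 z Cz.
  have [_ _ HOx] := HO x Ax.
  by exfalso; apply: (HOx z) => //; exists C.
apply/seteqP; split => // x Ax.
have xs : x \in s by rewrite As in Ax.
have ix : (index x s < size s)%N by rewrite index_mem.
have [w [Cw Vw]] := BC2 (Ordinal ix).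
move: Vw; rewrite /V /= nth_index // => Vw.
have Aw := CA w Cw.
case: (pselect (w = x)) => [<- //|wx].
by exfalso; apply: Vw; split.
Qed.

Theorem proposition4p3 (X : topologicalType) (hX : hausdorff_space X)
  (A : set X) (hA : hypF A) :
  [<-> weakP_hyp (hypF (X:=X)) A;
       (forall n : nat, (0 < n)%N -> A #<= `I_n -> weakP_hyp (hypFn (X:=X) n) A);
       (forall x, A x -> weakP_point x)].
Proof.
have himg : forall x y, A x -> hypF ((fun z => if z == x then y else z) @` A).
  move=> x y Ax; split; first exact: finite_image hA.1.
  by exists ((fun z => if z == x then y else z) x); exists x.
have [n An] := hA.1.
have Ale : A #<= `I_n by move: An; rewrite card_eq_le => /andP[].
have n0 : (0 < n)%N.
  case: n An Ale => // An _; exfalso.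
  move: An; rewrite II0 card_eq0 => /eqP A0.
  by case: hA.2 => z; rewrite A0.
have c2 : (forall x, A x -> weakP_point x) -> weakP_hyp (hypF (X:=X)) A.
  by move=> H; apply: L2 => //.
have c3 : weakP_hyp (hypF (X:=X)) A -> forall x, A x -> weakP_point x.
  by move=> H x Ax; apply: (@L1 X A _ x Ax _ H) => y _; apply: himg.
tfae.
- move=> H m m0 Am; apply: (@L2 X hX A (hypFn (X:=X) m) hA).
  + by split.
  + by move=> C [].
  + exact: c3.
- move=> H x Ax; apply: (@L1 X A _ x Ax _ (H n n0 Ale)) => y _; split; first exact: himg.
  exact: card_le_trans (card_image_le _ _) Ale.
- exact: c2.
Qed.
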